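(* Let $A\in \mathrm{GL}(m,\mathbb{Z})$, and suppose that there exist a sequence of integers $r_i\to\infty$ and matrices $B_i\in\mathrm{GL}(m,\mathbb{Z})$ satisfying $B_i^{r_i}=A$. Then there exists a nonzero integer $e$ such that $A^e=\mathrm{Id}$. *)

(* Defs.v *)
From mathcomp Require Import all_boot all_order all_algebra.
Set Implicit Arguments. Unset Strict Implicit. Unset Printing Implicit Defensive.
Import GRing.Theory Num.Theory.
Local Open Scope ring_scope.

(* Natural power of an m x m matrix (works for every m, including m = 0). *)
Definition mxpown (m : nat) (B : 'M[int]_m) (n : nat) : 'M[int]_m :=
  iter n (mulmx B) 1%:M.

(* Integer power: for negative exponents use the matrix inverse
   (only meaningful for B \in unitmx, i.e. B in GL(m,Z)). *)
Definition mxpowz (m : nat) (B : 'M[int]_m) (z : int) : 'M[int]_m :=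
  match z with
  | Posz n => mxpown B n
  | Negz n => mxpown (invmx B) n.+1
  end.

Definition GLZ (m : nat) (A : 'M[int]_m) : Prop := A \in unitmx.

(* Main.v *)
Require Import Defs.
From mathcomp Require Import all_boot all_order all_algebra.
From mathcomp Require Import all_field zify.
From Stdlib Require Import Classical.
Import Order.TTheory GRing.Theory Num.Theory.
Local Open Scope ring_scope.


Lemma powN_form {R : pzRingType} (N : R) (s : nat) :
  exists W, GRing.comm N W /\ (1 + N) ^+ s = 1 + N * (s%:R + N * W).
Proof.
elim: s => [|s [W [cW eW]]].
  by exists 0; split; [exact: commr0 | rewrite expr0 mulr0 addr0 mulr0 addr0].
exists (W + s%:R + N * W); split.
  apply: commrD; [apply: commrD => //; exact: commr_nat|].
  by apply: commrM => //; exact: commrr.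
have cY : GRing.comm (s%:R + N * W) N.
  apply/commr_sym; apply: commrD; [exact: commr_nat| apply: commrM => //; exact: commrr].
rewrite exprSr eW mulrDl mul1r -mulrA mulrDr mulr1 cY.
by rewrite -natr1 !mulrDr !mulr1 !addrA [1 + N + _]addrAC.
Qed.

Lemma powY_form {R : pzRingType} (N W : R) (c : nat) (j : nat) :
  exists Z, (c%:R + N * W) ^+ j = (c ^ j)%:R + N * Z.
Proof.
elim: j => [|j [Z eZ]].
  by exists 0; rewrite expr0 expn0 mulr0 addr0.
exists ((c ^ j)%:R * W + Z * c%:R + Z * (N * W)).
rewrite exprSr eZ mulrDr !mulrDl -natrM -expnSr.
rewrite -!addrA; congr (_ + _).
rewrite !mulrDr !mulrA -(commr_nat N (c ^ j)).
by rewrite addrA [_ + N * _ * W]addrC addrA.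
Qed.

Lemma key_alg {R : pzRingType} (N : R) (s u : nat) : N ^+ u.+1 = 0 ->
  ((1 + N) ^+ s - 1) ^+ u.+1 = 0 /\ ((1 + N) ^+ s - 1) ^+ u = N ^+ u *+ (s ^ u).
Proof.
move=> Nu.
have [W [cW eW]] := powN_form N s.
set Y := s%:R + N * W.
have cNY : GRing.comm N Y.
  apply: commrD; [exact: commr_nat| apply: commrM => //; exact: commrr].
have eX : (1 + N) ^+ s - 1 = N * Y by rewrite eW addrC addKr.
rewrite eX !exprMn_comm //.
split; first by rewrite Nu mul0r.
have [Z eZ] := powY_form N W s u.
rewrite eZ mulrDr mulrA -exprSr Nu mul0r addr0.
by rewrite mulr_natr.
Qed.

Lemma pigeon_seq (T : eqType) (C : nat -> Prop) (f : nat -> T) (s : seq T) :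
  (exists2 t, t \in s & forall n, exists i, (n <= i)%N /\ C i /\ f i = t) \/
  (exists n, forall i, (n <= i)%N -> C i -> f i \notin s).
Proof.
elim: s => [|a s IH]; first by right; exists 0%N.
case: IH => [[t ts H]|[n Hn]]; first by left; exists t => //; rewrite inE ts orbT.
case: (classic (forall n, exists i, (n <= i)%N /\ C i /\ f i = a)) => Ha.
  by left; exists a => //; rewrite inE eqxx.
right; have [n2 Hn2] := not_all_ex_not _ _ Ha.
exists (maxn n n2) => i; rewrite geq_max => /andP[ni n2i] Ci.
rewrite inE negb_or Hn // andbT; apply/eqP => fia.
by apply: Hn2; exists i.
Qed.

Lemma pigeon (T : finType) (C : nat -> Prop) (f : nat -> T) :
  (forall n, exists i, (n <= i)%N /\ C i) ->
  exists t, forall n, exists i, (n <= i)%N /\ C i /\ f i = t.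
Proof.
move=> HC; case: (@pigeon_seq T C f (enum T)) => [[t _ H]|[n Hn]]; first by exists t.
have [i [ni Ci]] := HC n.
by have := Hn i ni Ci; rewrite mem_enum.
Qed.

Lemma coef_prod_bound (c : algC) (S : seq algC) : 0 <= c ->
  {in S, forall z, `|z| <= c} ->
  forall k, `|(\prod_(z <- S) ('X - z%:P))`_k| <= (1 + c) ^+ size S.
Proof.
move=> c0; elim: S => [|a S IH] HS k.
  by rewrite big_nil coefC expr0; case: (k == 0%N); rewrite ?normr1 ?normr0 ?ler01.
rewrite big_cons mulrBl coefB coefXM coefCM /= exprS mulrDl mul1r.
have IH' := IH (fun z zS => HS z (mem_behead (s:=a :: S) zS)).
have ha : `|a| <= c by apply: HS; rewrite inE eqxx.
apply: (le_trans (ler_normB _ _)); apply: lerD.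
  by case: (k == 0%N); rewrite ?normr0 ?exprn_ge0 ?addr_ge0 ?ler01 ?IH'.
rewrite normrM; apply: ler_pM => //.
Qed.

Lemma bound_seq (S : seq algC) : exists2 L : algC, 1 <= L & {in S, forall z, `|z| <= L}.
Proof.
elim: S => [|a S [L L1 HL]]; first by exists 1.
exists (L + `|a|); first by rewrite -[1]addr0 lerD.
move=> z; rewrite inE => /orP[/eqP->|zS]; first by rewrite lerDr (le_trans ler01 L1).
by rewrite (le_trans (HL z zS)) // lerDl.
Qed.

Lemma root_pow_bound (mu : algC) (s : nat) (L : algC) : (0 < s)%N -> 1 <= L ->
  `|mu ^+ s| <= L -> `|mu| <= L.
Proof.
move=> s0 L1; rewrite normrX => H.
have := ger_leVge (normr_ge0 mu) ler01.
case/orP => h; first exact: le_trans h L1.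
exact: le_trans (ler_eXnr s0 h) H.
Qed.

Lemma map_mxX (n : nat) (B : 'M[int]_n.+1) (s : nat) :
  map_mx (intr : int -> algC) (B ^+ s) = (map_mx intr B) ^+ s.
Proof.
elim: s => [|s IH]; first by rewrite !expr0 -!idmxE map_scalar_mx rmorph1.
by rewrite !exprS -!mulmxE map_mxM IH.
Qed.

Lemma eig_pow (n : nat) (B A : 'M[algC]_n.+1) (s : nat) (mu : algC) :
  B ^+ s = A -> root (char_poly B) mu -> root (char_poly A) (mu ^+ s).
Proof.
move=> <-; rewrite -!eigenvalue_root_char => /eigenvalueP [v vB v0].
apply/eigenvalueP; exists v => //.
elim: s => [|s IH]; first by rewrite expr0 scale1r -idmxE mulmx1.
by rewrite exprSr -mulmxE mulmxA IH -scalemxAl vB scalerA exprSr.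
Qed.
Lemma t3 (v w : int) (k s : nat) : v = w *+ k -> v != 0 -> (s <= k)%N -> ((absz v)%:Z + 1 <= s%:Z) -> False.
Proof. move=> -> h1 h2 h3. rewrite -mulr_natr natz in h1 h3.
have : (0 < absz w)%N by move: h1; rewrite mulf_eq0 negb_or => /andP[]; lia.
move: h3; rewrite abszM /=. nia. Qed.

Lemma noroot0 (n : nat) (C : 'M[algC]_n.+1) : C \in unitmx -> ~~ root (char_poly C) 0.
Proof.
move=> Cu; rewrite -eigenvalue_root_char; apply/negP => /eigenvalueP [v vC v0].
move/negP: v0; apply; apply/eqP.
by rewrite -[v]mulmx1 -(mulmxV Cu) mulmxA vC scale0r mul0mx.
Qed.

Lemma common_order (S : seq algC) :
  (forall mu, mu \in S -> exists2 d, (0 < d)%N & mu ^+ d = 1) ->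
  exists2 M, (0 < M)%N & forall mu, mu \in S -> mu ^+ M = 1.
Proof.
elim: S => [|a S IH] H; first by exists 1%N.
have [M M0 HM] := IH (fun mu muS => H mu (mem_behead (s:=a :: S) muS)).
have [d d0 hd] := H a (mem_head _ _).
exists (d * M)%N; first by rewrite muln_gt0 d0.
move=> mu; rewrite inE => /orP[/eqP->|muS]; first by rewrite exprM hd expr1n.
by rewrite mulnC exprM HM // expr1n.
Qed.

Lemma prod_dvd (S : seq algC) (M : nat) : (forall mu, mu \in S -> mu ^+ M = 1) ->
  \prod_(z <- S) ('X - z%:P) %| ('X ^+ M - 1) ^+ (size S).
Proof.
elim: S => [|a S IH] H; first by rewrite big_nil expr0 dvdpp.
rewrite big_cons /= exprS; apply: dvdp_mul.
  by rewrite dvdp_XsubCl rootE !hornerE H ?mem_head // subrr.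
by apply: IH => mu muS; apply: H; rewrite inE muS orbT.
Qed.

Lemma last_nonzero (R : nzRingType) (N : R) (t : nat) : N != 0 -> N ^+ t = 0 ->
  exists u, [/\ (0 < u)%N, N ^+ u != 0 & N ^+ u.+1 = 0].
Proof.
move=> N0; elim: t => [|t IH]; first by move/eqP; rewrite expr0 oner_eq0.
move=> Nt; case: (eqVneq (N ^+ t) 0) => h; first exact: IH.
exists t; split => //; case: t IH Nt h => // _; rewrite expr1 => Nt _; by rewrite Nt eqxx in N0.
Qed.

Lemma pow_le (R : pzRingType) (X : R) (a b : nat) : X ^+ a != 0 -> X ^+ b.+1 = 0 -> (a <= b)%N.
Proof.
move=> Xa Xb; rewrite leqNgt; apply/negP => ba.
move/negP: Xa; apply; apply/eqP.
by rewrite -(subnKC ba) exprD Xb mul0r.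
Qed.

Lemma mulmxn_neq0 (n : nat) (Mx : 'M[int]_n) (k : nat) : Mx != 0 -> (0 < k)%N -> Mx *+ k != 0.
Proof.
move=> /matrix0Pn [a [b hab]] k0; apply/matrix0Pn; exists a, b.
by rewrite mulmxnE mulrn_eq0 negb_or hab -lt0n k0.
Qed.

Lemma map_intr_inj (n : nat) (X Y : 'M[int]_n) :
  map_mx (intr : int -> algC) X = map_mx intr Y -> X = Y.
Proof.
move=> e; apply/matrixP => a b; have := congr1 (fun Mx : 'M[algC]_n => Mx a b) e.
by rewrite !mxE => /intr_inj.
Qed.

Lemma enc_inj (a b : int) (K : nat) : `|a| < K%:Z -> `|b| < K%:Z ->
  absz (a + K%:Z) = absz (b + K%:Z) -> a = b.
Proof. lia. Qed.

Lemma enc_lt (a : int) (K : nat) : `|a| < K%:Z -> (absz (a + K%:Z)%R < (2 * K).+1)%N.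
Proof. lia. Qed.

Theorem theorem4p1 (m : nat) (A : 'M[int]_m) (hA : GLZ A)
  (r : nat -> int) (B : nat -> 'M[int]_m)
  (hr : forall N : int, exists i0 : nat, forall i : nat, (i0 <= i)%N -> N <= r i)
  (hB : forall i : nat, GLZ (B i))
  (hBr : forall i : nat, mxpowz (B i) (r i) = A) :
  exists e : int, e != 0 /\ mxpowz A e = 1%:M.
Proof.
case: m A hA B hB hBr => [|n] A hA B hB hBr.
  by exists 1; split => //; rewrite [LHS]flatmx0 [RHS]flatmx0.
have powE : forall (C : 'M[int]_n.+1) k, mxpown C k = C ^+ k.
  by move=> C; elim=> [|k IH] //=; rewrite /mxpown /= -/(mxpown C k) IH exprS mulmxE.
pose AC := map_mx (intr : int -> algC) A.
have [RA eRA] := closed_field_poly_normal (char_poly AC).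
rewrite (monicP (char_poly_monic AC)) scale1r in eRA.
have rootA : forall z, root (char_poly AC) z -> z \in RA.
  by move=> z; rewrite eRA root_prod_XsubC.
have RA0 : 0 \notin RA.
  apply/negP => h; have := @noroot0 n AC; rewrite /AC unitmxE det_map_mx rmorph_unit; last by rewrite -unitmxE.
move=> /(_ isT).
  by rewrite eRA root_prod_XsubC h.
have [L L1 HL] := bound_seq RA.
pose K := Num.Def.archi_bound ((1 + L) ^+ n.+1).
have [i0 Hi0] := hr 1.
pose s i := absz (r i).
have rs : forall i, (i0 <= i)%N -> r i = (s i)%:Z /\ (0 < s i)%N.
  move=> i /Hi0 h; rewrite /s; split; lia.
have BsA : forall i, (i0 <= i)%N -> B i ^+ s i = A.
  by move=> i /rs [e _]; have := hBr i; rewrite e /= powE.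
have rootB : forall i mu, (i0 <= i)%N ->
    root (char_poly (map_mx (intr : int -> algC) (B i))) mu -> mu ^+ s i \in RA.
  move=> i mu hi hmu; apply: rootA; apply: eig_pow hmu.
  by rewrite -map_mxX BsA.
have coefB : forall i k, (i0 <= i)%N -> `|(char_poly (B i))`_k| < K%:Z.
  move=> i k hi.
  have [S eS] := closed_field_poly_normal (char_poly (map_mx (intr : int -> algC) (B i))).
  rewrite (monicP (char_poly_monic _)) scale1r in eS.
  have sS : size S = n.+1.
    by have := size_char_poly (map_mx (intr : int -> algC) (B i)); rewrite eS size_prod_XsubC => -[].
  have HS : {in S, forall z, `|z| <= L}.
    move=> z zS; apply: (@root_pow_bound z (s i) L (rs i hi).2 L1); apply: HL; apply: rootB hi _.
    by rewrite eS root_prod_XsubC.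
  have := @coef_prod_bound L S (le_trans ler01 L1) HS k.
  rewrite -eS -map_char_poly coef_map /= sS => h.
  rewrite -(ltr_int algC) intr_norm; apply: le_lt_trans h _.
  apply: archi_boundP; apply: exprn_ge0; exact: addr_ge0 ler01 (le_trans ler01 L1).
pose code i : {ffun 'I_n.+2 -> 'I_(2 * K).+1} :=
  [ffun k : 'I_n.+2 => inord (absz ((char_poly (B i))`_k + K%:Z))].
have [t Ht] := @pigeon _ (fun i => (i0 <= i)%N) code
  (fun n0 => ex_intro _ (maxn n0 i0) (conj (leq_maxl _ _) (leq_maxr _ _))).
have [i1 [_ [hi1 ci1]]] := Ht 0%N.
pose P := char_poly (B i1).
have charP : forall i, (i0 <= i)%N -> code i = t -> char_poly (B i) = P.
  move=> i hi ci; apply/polyP => k.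
  case: (ltnP k n.+2) => hk.
    have := congr1 (fun f : {ffun 'I_n.+2 -> 'I_(2 * K).+1} => val (f (Ordinal hk))) (etrans ci (esym ci1)).
    have h1 := coefB i k hi; have h2 := coefB i1 k hi1.
    rewrite /= !ffunE /= !inordK /P; [exact: enc_inj h1 h2 | exact: enc_lt h2 | exact: enc_lt h1].
  by rewrite !nth_default // size_char_poly.
pose PC := map_poly (intr : int -> algC) P.
have ePC : forall i, (i0 <= i)%N -> code i = t ->
    char_poly (map_mx (intr : int -> algC) (B i)) = PC.
  by move=> i hi ci; rewrite -map_char_poly charP.
have [S eS] := closed_field_poly_normal PC.
rewrite -(ePC i1 hi1 ci1) (monicP (char_poly_monic _)) scale1r (ePC i1 hi1 ci1) in eS.
have sS : size S = n.+1.
  by have := size_char_poly (map_mx (intr : int -> algC) (B i1)); rewrite (ePC i1 hi1 ci1) eS size_prod_XsubC => -[].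
have HC1 : forall n0, exists i, (n0 <= i)%N /\ ((i0 <= i)%N /\ code i = t).
  by move=> n0; have [i [a [b c]]] := Ht n0; exists i.
have unityS : forall mu, mu \in S -> exists2 d, (0 < d)%N & mu ^+ d = 1.
  move=> mu muS.
  have rmu : forall i, (i0 <= i)%N -> code i = t -> mu ^+ s i \in RA.
    by move=> i hi ci; apply: (rootB i mu hi); rewrite (ePC i hi ci) eS root_prod_XsubC.
  pose g i : 'I_(size RA).+1 := inord (index (mu ^+ s i) RA).
  have [t2 Ht2] := @pigeon _ _ g HC1.
  have [i [_ [[hi ci] gi]]] := Ht2 0%N.
  have [n1 Hn1] := hr ((s i)%:Z + 1).
  have [j [hj [[hj0 cj] gj]]] := Ht2 n1.
  have sij : (s i < s j)%N by have := Hn1 j hj; rewrite (rs j hj0).1; lia.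
  have eij : mu ^+ s i = mu ^+ s j.
    have := congr1 val (etrans gi (esym gj)); rewrite /g /= !inordK ?ltnS ?index_size // => e.
    by rewrite -(nth_index 0 (rmu i hi ci)) -(nth_index 0 (rmu j hj0 cj)) e.
  have mu0 : mu != 0.
    apply/eqP => mu0; have := rmu i hi ci.
    by rewrite mu0 expr0n eqn0Ngt (rs i hi).2 /= (negbTE RA0).
  exists (s j - s i)%N; first by rewrite subn_gt0.
  apply: (mulfI (expf_neq0 (s i) mu0)); rewrite mulr1 -exprD subnKC ?(ltnW sij) //.
have [M M0 HM] := @common_order S unityS.
have nilN : forall i, (i0 <= i)%N -> code i = t -> (B i ^+ M - 1) ^+ n.+1 = 0.
  move=> i hi ci; apply: map_intr_inj.
  rewrite rmorph0 !rmorphXn rmorphB rmorph1 !rmorphXn.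
  set BC := map_mx (intr : int -> algC) (B i).
  have dv : PC %| ('X ^+ M - 1) ^+ n.+1 by rewrite eS -sS; exact: prod_dvd.
  have [q eq] := dvdpP _ _ dv.
  have := congr1 (horner_mx BC) eq.
  rewrite rmorphM /= -(ePC i hi ci) Cayley_Hamilton mulr0 rmorphXn rmorphB rmorph1 rmorphXn /= horner_mx_X.
  done.
pose X := A ^+ M - 1.
case: (eqVneq X 0) => X0.
  exists M%:Z; split; first by rewrite eqz_nat -lt0n.
  by rewrite /= powE; apply: subr0_eq.
exfalso.
have XN : forall i, (i0 <= i)%N -> X = (1 + (B i ^+ M - 1)) ^+ s i - 1.
  by move=> i hi; rewrite /X [1 + _]addrC subrK -exprM mulnC exprM BsA.
have inst : forall i, (i0 <= i)%N -> code i = t -> exists u,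
    [/\ (0 < u)%N, X ^+ u.+1 = 0, X ^+ u = (B i ^+ M - 1) ^+ u *+ (s i ^ u)
      & (B i ^+ M - 1) ^+ u != 0].
  move=> i hi ci; set N := B i ^+ M - 1.
  have N0 : N != 0.
    by apply: contra_neq X0 => N0; rewrite (XN i hi) -/N N0 addr0 expr1n subrr.
  have [u [u0 nu nu1]] := @last_nonzero _ N _ N0 (nilN i hi ci).
  have [k1 k2] := @key_alg _ N (s i) u nu1.
  by exists u; rewrite (XN i hi) -/N; split.
have Xnz : forall i u, (i0 <= i)%N -> X ^+ u = (B i ^+ M - 1) ^+ u *+ (s i ^ u) ->
    (B i ^+ M - 1) ^+ u != 0 -> X ^+ u != 0.
  move=> i u hi -> h; apply: mulmxn_neq0 h _; by rewrite expn_gt0 (rs i hi).2.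
have [u1 [u10 Xu1 eX1 Nu1]] := inst i1 hi1 ci1.
have Xu1nz := Xnz i1 u1 hi1 eX1 Nu1.
have [a [b hab]] := matrix0Pn _ Xu1nz.
set v := (X ^+ u1) a b in hab.
have [n2 Hn2] := hr ((absz v)%:Z + 1).
have [i2 [hi2n [hi2 ci2]]] := Ht n2.
have [u2 [u20 Xu2 eX2 Nu2]] := inst i2 hi2 ci2.
have Xu2nz := Xnz i2 u2 hi2 eX2 Nu2.
have u12 : u1 = u2 by apply/eqP; rewrite eqn_leq (pow_le _ _ _ _ Xu1nz Xu2) (pow_le _ _ _ _ Xu2nz Xu1).
subst u2.
have ev : v = ((B i2 ^+ M - 1) ^+ u1) a b *+ (s i2 ^ u1).
  by rewrite /v eX2 mulmxnE.
have sv := Hn2 i2 hi2n; rewrite (rs i2 hi2).1 in sv.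
have sle : (s i2 <= s i2 ^ u1)%N.
  by rewrite -{1}(expn1 (s i2)) leq_pexp2l // (rs i2 hi2).2.
exact: t3 ev hab sle sv.
Qed.
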